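(* Let $M\in\mathbb{R}^{m\times n}$ with $\operatorname{rank}(M)=r$, and let $\{p_i\}_{i=1}^n$ be a probability distribution on $[n]$ with $p_i>0$ for all $i$, $p_{\min}=\min_{i\in[n]}p_i$. For $j=1,\dots,d$ independently sample $i_j\in[n]$ with $\Pr[i_j=i]=p_i$, and let $A\in\mathbb{R}^{m\times d}$ have columns $A^{(j)}=M^{(i_j)}/\sqrt{d\,p_{i_j}}$. Let $t>0$. If $d\ge 7\mu(r)r(t+\ln r)/(n\,p_{\min})$, then with probability at least $1-e^{-t}$, $\operatorname{rank}(A)=r$.
   Context: For a matrix $B$, $B_{(i)}$ denotes its $i$-th row and $B^{(j)}$ its $j$-th column. With $\bar U\in\mathbb{R}^{m\times r}$, $\bar V\in\mathbb{R}^{n\times r}$ the top-$r$ left and right singular vectors of $M$, the incoherence is $\mu(r)=\max\left(\max_{i\in[m]}\frac{m}{r}\|\bar U_{(i)}\|_2^2,\ \max_{i\in[n]}\frac{n}{r}\|\bar V_{(i)}\|_2^2\right)$. *)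

(* Defs.v *)
From HB Require Import structures.
From mathcomp Require Import all_boot all_order all_algebra.
From mathcomp Require Import all_classical all_reals all_analysis.
Set Implicit Arguments. Unset Strict Implicit. Unset Printing Implicit Defensive.
Import Order.TTheory GRing.Theory Num.Theory.
Local Open Scope ring_scope.

Definition rownorm2 (R : realType) (a b : nat) (B : 'M[R]_(a, b)) (i : 'I_a) : R :=
  \sum_(k < b) (B i k) ^+ 2.

(* incoherence mu(r) computed from left/right singular vector matrices U, V.
   Row norms are nonnegative, so 0 is a harmless base for the iterated max. *)
Definition incoherence (R : realType) (m n r : nat)
  (U : 'M[R]_(m, r)) (V : 'M[R]_(n, r)) : R :=
  Num.max (\big[Num.max/0]_(i < m) (m%:R / r%:R * rownorm2 U i))
          (\big[Num.max/0]_(i < n) (n%:R / r%:R * rownorm2 V i)).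

(* minimum of p over [n]; for a probability vector every p i <= 1,
   so 1 is a harmless base for the iterated min *)
Definition pmin (R : realType) (n : nat) (p : 'I_n -> R) : R :=
  \big[Num.min/1]_(i < n) p i.

Definition sampleA (R : realType) (m n d : nat) (M : 'M[R]_(m, n))
  (p : 'I_n -> R) (f : {ffun 'I_d -> 'I_n}) : 'M[R]_(m, d) :=
  \matrix_(a < m, j < d) (M a (f j) / Num.sqrt (d%:R * p (f j))).

(* probability of an event on d i.i.d. samples i_1..i_d with Pr[i_j = i] = p i *)
Definition iid_prob (R : realType) (n d : nat) (p : 'I_n -> R)
  (E : {ffun 'I_d -> 'I_n} -> bool) : R :=
  \sum_(f : {ffun 'I_d -> 'I_n} | E f) \prod_(j < d) p (f j).

(* Main.v *)
Require Import Defs.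
From HB Require Import structures.
From mathcomp Require Import all_boot all_order all_algebra.
From mathcomp Require Import all_classical all_reals all_analysis.
From mathcomp Require Import ring lra.
Import Order.TTheory GRing.Theory Num.Theory.
Local Open Scope ring_scope.

Set Implicit Arguments. Unset Strict Implicit. Unset Printing Implicit Defensive.

Section Split.
Variable R : realType.

Definition consf n k (i : 'I_n) (g : {ffun 'I_k -> 'I_n}) : {ffun 'I_k.+1 -> 'I_n} :=
  [ffun j => if unlift ord0 j is Some j' then g j' else i].

Lemma consf0 n k (i : 'I_n) (g : {ffun 'I_k -> 'I_n}) : consf i g ord0 = i.
Proof. by rewrite ffunE unlift_none. Qed.

Lemma consfS n k (i : 'I_n) (g : {ffun 'I_k -> 'I_n}) (j : 'I_k) : consf i g (lift ord0 j) = g j.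
Proof. by rewrite ffunE liftK. Qed.

Lemma sum_ffunS n k (G : {ffun 'I_k.+1 -> 'I_n} -> R) :
  \sum_f G f = \sum_i \sum_(g : {ffun 'I_k -> 'I_n}) G (consf i g).
Proof.
rewrite pair_big /= (reindex (fun x : 'I_n * {ffun 'I_k -> 'I_n} => consf x.1 x.2)) //=.
exists (fun f => (f ord0, [ffun j => f (lift ord0 j)])).
- move=> [i g] _ /=; rewrite consf0; congr pair; apply/ffunP => j.
  by rewrite ffunE consfS.
- move=> f _ /=; apply/ffunP => j; rewrite ffunE.
  by case: unliftP => [j'|] -> /=; rewrite ?ffunE.
Qed.

End Split.

Set Implicit Arguments. Unset Strict Implicit. Unset Printing Implicit Defensive.

Section Expect.
Variable R : realType.
Variables (n r : nat) (V : 'M[R]_(n, r)) (p : 'I_n -> R).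

Definition Phi (X : 'M[R]_r) : R := r%:R - (\rank X)%:R.

Definition spanf k (f : {ffun 'I_k -> 'I_n}) : 'M[R]_r :=
  (\sum_(j < k) <<row (f j) V>>)%MS.

Definition Ek k (W : 'M[R]_r) : R :=
  \sum_(f : {ffun 'I_k -> 'I_n}) (\prod_(j < k) p (f j)) * Phi (W + spanf f)%MS.

Lemma Ek0 W : Ek 0 W = Phi W.
Proof.
rewrite /Ek (eq_bigr (fun _ => Phi W)); last first.
  move=> f _; rewrite big_ord0 mul1r /spanf big_ord0.
  by rewrite /Phi (addsmx0 _ W).
by rewrite sumr_const card_ffun !card_ord expn0.
Qed.

Lemma EkS k W : Ek k.+1 W = \sum_i p i * Ek k (W + <<row i V>>)%MS.
Proof.
rewrite /Ek sum_ffunS; apply: eq_bigr => i _; rewrite big_distrr /=.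
apply: eq_bigr => g _; rewrite big_ord_recl consf0 /spanf big_ord_recl consf0.
rewrite (eq_bigr (fun j => p (g j))); last by move=> j _; rewrite consfS.
rewrite (eq_bigr (fun j => <<row (g j) V>>%MS)); last by move=> j _; rewrite consfS.
by rewrite addsmxA mulrA.
Qed.

Lemma Phi_ge0 X : 0 <= Phi X.
Proof. by rewrite /Phi subr_ge0 ler_nat rank_leq_col. Qed.

Lemma Ek_bound (q : R) :
  (forall i, 0 <= p i) -> 0 <= 1 - q ->
  (forall W : 'M[R]_r, \sum_i p i * Phi (W + <<row i V>>)%MS <= (1 - q) * Phi W) ->
  forall k W, Ek k W <= (1 - q) ^+ k * Phi W.
Proof.
move=> p0 q1 step; elim=> [|k IH] W; first by rewrite Ek0 expr0 mul1r.
rewrite EkS; apply: (le_trans (y := \sum_i p i * ((1 - q) ^+ k * Phi (W + <<row i V>>)%MS))).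
  by apply: ler_sum => i _; apply: ler_wpM2l.
under eq_bigr do rewrite mulrCA.
rewrite -big_distrr /= exprSr -mulrA; apply: ler_wpM2l; first exact: exprn_ge0.
exact: step.
Qed.

End Expect.

Set Implicit Arguments. Unset Strict Implicit. Unset Printing Implicit Defensive.

Section Proj.
Variable R : realType.

Lemma rowsq k (w : 'rV[R]_k) : (w *m w^T) 0 0 = \sum_j w 0 j ^+ 2.
Proof. by rewrite mxE; apply: eq_bigr => j _; rewrite mxE expr2. Qed.

Lemma rowsq_ge0 k (w : 'rV[R]_k) : 0 <= (w *m w^T) 0 0.
Proof. by rewrite rowsq; apply: sumr_ge0 => j _; apply: sqr_ge0. Qed.

Lemma XXt0 m k (X : 'M[R]_(m, k)) : X *m X^T = 0 -> X = 0.
Proof.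
move=> H; apply/matrixP => i j; rewrite mxE.
have := congr1 (fun A : 'M[R]_(m) => A i i) H; rewrite !mxE.
move=> /psumr_eq0P h.
have hge : forall l, true -> 0 <= X i l * X^T l i.
  by move=> l _; rewrite mxE -expr2 sqr_ge0.
have := h hge j isT.
rewrite mxE => /eqP; rewrite mulf_eq0 orbb => /eqP //.
Qed.

Lemma proj_terms n r (V : 'M[R]_(n, r)) (W : 'M[R]_r) : V^T *m V = 1%:M ->
  exists term : 'I_n -> R,
    [/\ forall i, 0 <= term i, forall i, term i <= rownorm2 V i,
        forall i, (row i V <= W)%MS -> term i = 0 &
        \sum_i term i = (r - \rank W)%N%:R].
Proof.
move=> VV.
set K := kermx W^T.
set B := row_base K.
have BK : (B <= K)%MS by rewrite /B (eq_row_base K) submx_refl.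
have Bfree : row_free B by apply: row_base_free.
clearbody B.
set G := B *m B^T.
have Gu : G \in unitmx.
  rewrite -row_free_unit -kermx_eq0 -submx0.
  have KB : kermx G *m B = 0.
    apply: XXt0; rewrite trmx_mul mulmxA -(mulmxA _ B) mulmx_ker mul0mx //.
  have : (kermx G <= kermx B)%MS by apply/sub_kermxP.
  by rewrite (eqP (_ : kermx B == 0)) // kermx_eq0.
set P := B^T *m invmx G *m B.
have PP : P *m P = P.
  have -> : P *m P = B^T *m invmx G *m G *m invmx G *m B by rewrite /P /G !mulmxA.
  by rewrite mulmxKV.
have PT : P^T = P.
  by rewrite /P !trmx_mul trmxK trmx_inv /G trmx_mul trmxK mulmxA.
have tq : forall v : 'rV_r, v *m P *m v^T = (v *m P) *m (v *m P)^T.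
  by move=> v; rewrite trmx_mul PT (mulmxA (v *m P) P v^T) -(mulmxA v P P) PP.
set Q := 1%:M - P.
have QT : Q^T = Q by rewrite /Q linearB /= trmx1 PT.
have QQ : Q *m Q = Q by rewrite /Q mulmxBr mulmx1 mulmxBl mul1mx PP subrr subr0.
have tqQ : forall v : 'rV_r, v *m Q *m v^T = (v *m Q) *m (v *m Q)^T.
  by move=> v; rewrite trmx_mul QT (mulmxA (v *m Q) Q v^T) -(mulmxA v Q Q) QQ.
have WK : W *m K^T = 0.
  by have := congr1 trmx (mulmx_ker W^T); rewrite trmx_mul trmxK trmx0.
exists (fun i => (row i V *m P *m (row i V)^T) 0 0); split.
- by move=> i; rewrite tq rowsq_ge0.
- move=> i; set v := row i V.
  have -> : rownorm2 V i = (v *m v^T) 0 0.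
    by rewrite rowsq /rownorm2; apply: eq_bigr => b _; rewrite mxE.
  have -> : v *m v^T = v *m P *m v^T + v *m Q *m v^T.
    by rewrite /Q mulmxBr mulmx1 mulmxBl addrC subrK.
  have -> : forall A C : 'M[R]_1, (A + C) 0 0 = A 0 0 + C 0 0 by move=> A C; rewrite mxE.
  by rewrite lerDl tqQ rowsq_ge0.
- move=> i vW.
  have vB : row i V *m B^T = 0.
    case/submxP: vW => y ->; case/submxP: BK => X ->.
    by rewrite trmx_mul !mulmxA -(mulmxA y W) WK mulmx0 mul0mx.
  by rewrite /P !mulmxA vB !mul0mx mxE.
- have -> : \sum_i (row i V *m P *m (row i V)^T) 0 0 = \tr (V *m P *m V^T).
    rewrite /mxtrace; apply: eq_bigr => i _; rewrite !mxE.
    apply: eq_bigr => b _; rewrite !mxE; congr (_ * _).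
    by apply: eq_bigr => a _; rewrite !mxE.
  rewrite mxtrace_mulC mulmxA VV mul1mx /P mxtrace_mulC mulmxA -/G mulmxV //.
  by rewrite mxtrace1 mxrank_ker mxrank_tr.
Qed.

End Proj.

Set Implicit Arguments. Unset Strict Implicit. Unset Printing Implicit Defensive.

Section Step.
Variable R : realType.
Variables (n r : nat) (V : 'M[R]_(n, r)) (p : 'I_n -> R).

Lemma Phi_add (W : 'M[R]_r) (v : 'rV[R]_r) :
  Phi (W + <<v>>)%MS = Phi W - (~~ (v <= W)%MS)%:R.
Proof.
case: (boolP (v <= W)%MS) => h /=.
  have /addsmx_idPl e : (<<v>> <= W)%MS by rewrite genmxE.
  by rewrite /Phi e subr0.
have : (W < W + <<v>>)%MS.
  rewrite ltmxE addsmxSl /=; apply/negP => hW.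
  by move/negP: h; apply; apply: submx_trans hW; rewrite -genmxE addsmxSr.
rewrite ltmxErank => /andP [_ lt].
have le : (\rank (W + <<v>>)%MS <= \rank W + 1)%N.
  apply: leq_trans (mxrank_adds_leqif W <<v>>%MS).1 _.
  by rewrite leq_add2l genmxE rank_leq_row.
have e : \rank (W + <<v>>)%MS = (\rank W + 1)%N by apply/eqP; rewrite eqn_leq le addn1 lt.
by rewrite /Phi e natrD opprD addrA.
Qed.

Lemma step_ineq (q : R) : \sum_i p i = 1 ->
  (forall W : 'M[R]_r, q * Phi W <= \sum_i p i * (~~ (row i V <= W)%MS)%:R) ->
  forall W : 'M[R]_r, \sum_i p i * Phi (W + <<row i V>>)%MS <= (1 - q) * Phi W.
Proof.
move=> p1 ha W.
under eq_bigr do rewrite Phi_add mulrBr.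
by rewrite sumrB -mulr_suml p1 mul1r mulrBl mul1r; apply: lerB => //.
Qed.

Lemma a_bound (pm L : R) : V^T *m V = 1%:M -> 0 < L -> 0 <= pm ->
  (forall i, pm <= p i) -> (forall i, rownorm2 V i <= L) ->
  forall W : 'M[R]_r, pm / L * Phi W <= \sum_i p i * (~~ (row i V <= W)%MS)%:R.
Proof.
move=> VV L0 pm0 pmp hL W.
have [term [t0 tle tz ts]] := proj_terms W VV.
have -> : Phi W = \sum_i term i by rewrite ts natrB ?rank_leq_col.
rewrite mulr_sumr; apply: ler_sum => i _.
case: (boolP (row i V <= W)%MS) => h /=.
  by rewrite tz // mulr0 mulr0.
rewrite mulr1; apply: le_trans (pmp i).
rewrite -[X in _ <= X]mulr1 -mulrA ler_wpM2l // ler_pdivrMl // mulr1.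
exact: le_trans (tle i) (hL i).
Qed.

End Step.

Set Implicit Arguments. Unset Strict Implicit. Unset Printing Implicit Defensive.

Section Rank.
Variable R : realType.

Lemma rank_sampleA m n r d (M : 'M[R]_(m, n)) (U : 'M[R]_(m, r)) (V : 'M[R]_(n, r))
  (s : 'rV[R]_r) (p : 'I_n -> R) (f : {ffun 'I_d -> 'I_n}) :
  M = U *m diag_mx s *m V^T -> U^T *m U = 1%:M -> (forall k, 0 < s 0 k) ->
  (forall i, 0 < p i) -> \rank (sampleA M p f) = \rank (spanf V f).
Proof.
move=> hM UU s0 p0.
set S : 'M[R]_(n, d) := \matrix_(i, j) ((i == f j)%:R / Num.sqrt (d%:R * p (f j))).
have cpos : forall j : 'I_d, 0 < Num.sqrt (d%:R * p (f j)).
  move=> j; rewrite sqrtr_gt0 mulr_gt0 // ltr0n; exact: (leq_ltn_trans (leq0n j) (ltn_ord j)).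
have -> : sampleA M p f = M *m S.
  apply/matrixP => a j; rewrite !mxE (bigD1 (f j)) //= mxE eqxx mul1r big1 ?addr0 //.
  by move=> i ne; rewrite mxE (negbTE ne) mul0r mulr0.
have -> : \rank (M *m S) = \rank (V^T *m S).
  rewrite hM -!mulmxA; apply/eqP; rewrite eqn_leq; apply/andP; split.
    exact: leq_trans (mxrankM_maxr _ _) (mxrankM_maxr _ _).
  set Dinv := diag_mx (\row_k (s 0 k)^-1).
  have DD : Dinv *m diag_mx s = 1%:M.
    apply/matrixP => i j; rewrite mul_diag_mx !mxE.
    case: eqVneq => [->|ne]; first by rewrite mulr1n mulVf // gt_eqF.
    by rewrite mulr0n mulr0.
  have e : (Dinv *m U^T) *m (U *m (diag_mx s *m (V^T *m S))) = V^T *m S.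
    by rewrite !mulmxA -(mulmxA Dinv) UU mulmx1 DD mul1mx.
  by rewrite -{1}e; exact: mxrankM_maxr.
rewrite -mxrank_tr trmx_mul trmxK.
have rowE : forall j, row j (S^T *m V) = (Num.sqrt (d%:R * p (f j)))^-1 *: row (f j) V.
  move=> j; apply/rowP => b; rewrite !mxE (bigD1 (f j)) //= !mxE eqxx mul1r big1 ?addr0 //.
  by move=> i ne; rewrite !mxE (negbTE ne) mul0r mul0r.
apply: eqmx_rank; apply/andP; split.
  apply/row_subP => j; rewrite rowE scalemx_sub //.
  by apply: (sumsmx_sup j) => //; rewrite genmxE submx_refl.
apply/sumsmx_subP => j _; rewrite genmxE.
have -> : row (f j) V = Num.sqrt (d%:R * p (f j)) *: row j (S^T *m V).
  by rewrite rowE scalerA mulfV ?scale1r // gt_eqF.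
by rewrite scalemx_sub // row_sub.
Qed.

End Rank.

Unset Implicit Arguments. Set Strict Implicit. Set Printing Implicit Defensive.

Theorem lemma1 (R : realType) (m n r d : nat) (M : 'M[R]_(m, n))
  (U : 'M[R]_(m, r)) (V : 'M[R]_(n, r)) (s : 'rV[R]_r)
  (p : 'I_n -> R) (t : R) :
  \rank M = r ->
  M = U *m diag_mx s *m V^T ->
  U^T *m U = 1%:M ->
  V^T *m V = 1%:M ->
  (forall k : 'I_r, 0 < s 0 k) ->
  (forall k l : 'I_r, (k <= l)%N -> s 0 l <= s 0 k) ->
  (forall i, 0 < p i) ->
  \sum_(i < n) p i = 1 ->
  0 < t ->
  7 * incoherence U V * r%:R * (t + ln r%:R) / (n%:R * pmin p) <= d%:R ->
  1 - expR (- t) <=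
    iid_prob p (fun f : {ffun 'I_d -> 'I_n} => \rank (sampleA M p f) == r).
Proof.
move=> hr hM UU VV s0 smono p0 p1 t0 hd.
set E := (fun f : {ffun 'I_d -> 'I_n} => \rank (sampleA M p f) == r).
have p0' : forall i, 0 <= p i by move=> i; apply: ltW.
have tot : \sum_(f : {ffun 'I_d -> 'I_n}) \prod_(j < d) p (f j) = 1.
  rewrite -(bigA_distr_bigA (fun (_ : 'I_d) (i : 'I_n) => p i)) /=.
  by rewrite (eq_bigr (fun _ => 1)) ?big1_eq // => i _.
have fail : 1 - iid_prob p E = \sum_(f | ~~ E f) \prod_(j < d) p (f j).
  by rewrite /iid_prob -{1}tot (bigID E) /= addrC addrK.
have hEk : \sum_(f | ~~ E f) \prod_(j < d) p (f j) <= Ek V p d 0.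
  rewrite /Ek big_mkcond /=; apply: ler_sum => f _.
  have w0 : 0 <= \prod_(j < d) p (f j) by apply: prodr_ge0.
  case: ifP => hE; last by rewrite mulr_ge0 // Phi_ge0.
  apply: ler_peMr => //.
  rewrite /Phi (adds0mx _ (spanf V f)) -(rank_sampleA f hM UU s0 p0).
  have lt : (\rank (sampleA M p f) < r)%N.
    move: hE; rewrite /E ltn_neqAle => ->.
    by rewrite (rank_sampleA f hM UU s0 p0) rank_leq_col.
  by rewrite lerBrDl -[1]/(1%:R) -natrD ler_nat addn1.
have Phi0 : Phi (0 : 'M[R]_r) = r%:R by rewrite /Phi mxrank0 subr0.
suff : Ek V p d 0 <= expR (- t).
  move=> h; rewrite lerBlDr -lerBlDl fail; exact: le_trans hEk h.
case: (pickP (fun _ : 'I_n => true)) => [i0 _|none]; last first.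
  move: p1; rewrite big1 => [/eqP|i _]; last by have := none i.
  by rewrite eq_sym oner_eq0.
have n0 : (0 < n)%N by apply: leq_ltn_trans (leq0n i0) (ltn_ord i0).
case: (posnP r) => [r0|rpos].
  have h0 : forall W : 'M[R]_r, 0 * Phi W <= \sum_i p i * (~~ (row i V <= W)%MS)%:R.
    move=> W; rewrite mul0r; apply: sumr_ge0 => i _; exact: mulr_ge0.
  have := Ek_bound p0' _ (step_ineq p1 h0) d 0.
  rewrite subr0 expr1n mul1r Phi0 => /(_ ler01) h.
  by apply: le_trans h _; rewrite (_ : r%:R = 0 :> R) ?expR_ge0 // r0.
set L := \big[Num.max/0]_(i < n) rownorm2 V i.
have hL : forall i, rownorm2 V i <= L by move=> i; rewrite /L (bigD1 i) //= le_max lexx.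
set pm := pmin p.
have pmp : forall i, pm <= p i by move=> i; rewrite /pm /pmin (bigD1 i) //= ge_min lexx.
have pm0 : 0 < pm.
  rewrite /pm /pmin; apply: (big_ind (fun x => 0 < x)) => //.
  by move=> x y hx hy; rewrite lt_min hx hy.
have rn_ge0 : forall i, 0 <= rownorm2 V i.
  by move=> i; rewrite /rownorm2; apply: sumr_ge0 => k _; apply: sqr_ge0.
have L0 : 0 < L.
  rewrite ltNge; apply/negP => hL0.
  have [term [t0' tle tz ts]] := proj_terms (0 : 'M[R]_r) VV.
  move: ts; rewrite big1 => [|i _]; last first.
    apply/eqP; rewrite eq_le t0' andbT; exact: le_trans (tle i) (le_trans (hL i) hL0).
  rewrite mxrank0 subn0 => /eqP; rewrite eq_sym pnatr_eq0 => /eqP r0.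
  by move: rpos; rewrite r0.
set q := pm / L.
have q0 : 0 <= q by rewrite /q divr_ge0 // ltW.
have ha := a_bound VV L0 (ltW pm0) pmp hL.
have hq1 : q <= 1.
  have := ha 0; rewrite Phi0 => h.
  have hq : q <= q * r%:R by apply: ler_peMr => //; rewrite ler1n.
  apply: le_trans hq (le_trans h _).
  rewrite -[X in _ <= X]p1; apply: ler_sum => i _.
  by case: (~~ _); rewrite /= ?mulr1 ?mulr0.
have hE := Ek_bound p0' _ (step_ineq p1 ha) d 0.
rewrite subr_ge0 in hE; have {hE} hE := hE hq1.
apply: le_trans hE _; rewrite Phi0.
have X0 : 0 <= t + ln r%:R by apply: addr_ge0; [exact: ltW | apply: ln_ge0; rewrite ler1n].
set mu := incoherence U V.
have nmu : forall i, n%:R / r%:R * rownorm2 V i <= mu.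
  move=> i; rewrite /mu /incoherence le_max; apply/orP; right.
  by rewrite (bigD1 i) //= le_max lexx.
have mu0 : 0 <= mu.
  apply: le_trans (nmu i0); apply: mulr_ge0 => //; exact: divr_ge0.
have hLmu : L <= r%:R / n%:R * mu.
  rewrite /L; apply: (big_ind (fun x => x <= r%:R / n%:R * mu)).
  - by apply: mulr_ge0 => //; exact: divr_ge0.
  - by move=> x y hx hy; rewrite ge_max hx hy.
  move=> i _; have := nmu i.
  have rR : (r%:R : R) != 0 by rewrite pnatr_eq0 -lt0n.
  have nR : (n%:R : R) != 0 by rewrite pnatr_eq0 -lt0n.
  move=> h; apply: le_trans (ler_wpM2l _ h); last by apply: divr_ge0.
  by rewrite mulrA -[X in X * _]mulrA mulKf // divff // mul1r.
have h2 : n%:R * L <= r%:R * mu.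
  have nP : (0 : R) < n%:R by rewrite ltr0n.
  by move: hLmu; rewrite mulrAC ler_pdivlMr // mulrC.
have h1 : 7 * mu * r%:R * (t + ln r%:R) <= d%:R * (n%:R * pm).
  by rewrite -ler_pdivrMr // mulr_gt0 // ltr0n.
have key : t + ln r%:R <= q * d%:R.
  rewrite /q mulrAC ler_pdivlMr //.
  have nP : (0 : R) < n%:R by rewrite ltr0n.
  rewrite -(ler_pM2l nP).
  set X := t + ln r%:R.
  have h3 : X * (n%:R * L) <= X * (r%:R * mu) by apply: ler_wpM2l.
  have h4 : 0 <= X * (r%:R * mu) by rewrite !mulr_ge0.
  move: h1 h3 h4 X0; rewrite -/X; clearbody X => h1 h3 h4 X0. nra.
have e1 : (1 - q) ^+ d <= expR (- q) ^+ d.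
  apply: lerXn2r; rewrite ?nnegrE ?subr_ge0 ?expR_ge0 //.
  by rewrite -[1 - q]/(1 + - q) expR_ge1Dx.
apply: le_trans (ler_wpM2r (ler0n _ _) e1) _.
rewrite -expRM_natl -[X in _ * X <= _](@lnK _ r%:R) ?posrE ?ltr0n // -expRD ler_expR.
lra.
Qed.
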